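(* Let $h\ge 2$ be an integer and $\lambda_G,\lambda_L,\gamma>0$. Let $S=\{(a,b): a\ge 1,\ b\ge 1,\ a+b\le h\}\cup\{(0,1)^\ast\}$ and let $\mathbf{P}=(p_{s,t})_{s,t\in S}$, $\Phi=(\phi_{s,t})_{s,t\in S}$ be the matrices whose only non-zero entries are as follows: for $(a,b)\in S$ with $a\ge 1$, $p_{(a,b),(a-1,b+1)}=\frac{a\lambda_L}{a\lambda_L+\gamma}$ and $\phi_{(a,b),(a-1,b+1)}=\frac{a\lambda_L}{b(a\lambda_L+\gamma)}$ if $a>1$; $p_{(1,b),(0,1)^\ast}=\frac{\lambda_L}{\lambda_L+\gamma}$ and $\phi_{(1,b),(0,1)^\ast}=\frac{\lambda_L}{b(\lambda_L+\gamma)}$; $p_{(a,b),(a,b-1)}=\frac{(b-1)\gamma}{b(a\lambda_L+\gamma)}$ if $b\ge 2$; $\phi_{(a,b),(h-1,1)}=\frac{\lambda_G}{b(a\lambda_L+\gamma)}$; and $\phi_{(0,1)^\ast,(h-1,1)}=\lambda_G/\gamma$ (the row of $\mathbf{P}$ indexed by $(0,1)^\ast$ is zero). Let $\mathbf{M}=(\mathbf{I}-\mathbf{P})^{-1}\Phi$ and $\mu_G=\lambda_G/\gamma$. Let $\mathbf{y}^{(0)}$ be the row vector indexed by $S$ with $y^{(0)}_{(h-1,1)}=1$ and all other entries $0$, and for $n\ge 1$ let $\mathbf{y}^{(n)}=\mathbf{y}^{(n-1)}\mathbf{M}=\mathbf{y}^{(0)}\mathbf{M}^n$ (the vector of mean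 numbers of infectives of each type in generation $n$ of the epidemic). For $i=0,\ldots,h-1$ let $\mu_i$ be the mean number of infectives in generation $i$ of the single-household epidemic described in the context. Define $x_{n,i}$ ($n\ge 0$, $0\le i\le h-1$) by $x_{0,0}=1$, $x_{0,i}=0$ for $i\ge 1$, and for $n\ge 1$: $x_{n,0}=\mu_G\sum_{i=0}^{h-1}x_{n-1,i}$ and $x_{n,i}=\mu_i x_{n-i,0}$ for $1\le i\le h-1$ (with $x_{m,0}=0$ for $m<0$). Then for all $n=0,1,2,\ldots$, $$y^{(n)}_{(h-1,1)}=x_{n,0},$$ and, writing $y_n=\sum_{s\in S}y^{(n)}_s$ and $x_n=\sum_{j=0}^{h-1}x_{n,j}$, we have $y_n=x_n$.
   Context: Single-household Markovian SIR epidemic: a household of $h$ individuals initially contains one infective and $h-1$ susceptibles. Each infective remains infectious for an exponentially distributed time with rate $\gamma$ (independently), during which it makes contacts with each other given household member at the points of independent homogeneous Poisson processes of rate $\lambda_L$; a contacted susceptible immediately becomes infectious. Generations: the initial infective is in generation $0$, and an individual infected by an infective of generation $i-1$ is in generation $i$. In the full household model, each infective additionally makes global contacts at rate $\lambda_G$, each creating a new infectious household in state $(h-1,1)$; a state $(a,b)$ denotes a household with $a$ susceptibles and $b$ infectives, and states with no susceptibles are amalgamated into $(0,1)^\ast$. $\mathbf{M}$ is the mean reproduction matrix: $m_{s,t}$ is the mean number of type-$t$ infectives generated by an individual infected as a member of a type-$s$ infectious unit. The quantity $x_{n,i}$ is the mean number of individuals in generation $n$ of the epidemic who belong to generation $i$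 of their household epidemic. *)

(* Defs.v *)
From HB Require Import structures.
From mathcomp Require Import all_boot all_order all_algebra.
Set Implicit Arguments.
Unset Strict Implicit.
Unset Printing Implicit Defensive.
Import Order.TTheory GRing.Theory Num.Theory.
Local Open Scope ring_scope.

(* A state (a,b) : a susceptibles, b infectives, with a >= 1, b >= 1,
   a + b <= h; the amalgamated state (0,1)^* is encoded as the pair (0,1). *)
Definition stateP (h : nat) (x : 'I_h.+1 * 'I_h.+1) : bool :=
  [&& (0 < x.1)%N, (0 < x.2)%N & (x.1 + x.2 <= h)%N]
  || ((x.1 == 0%N :> nat) && (x.2 == 1%N :> nat)).

Record hstate (h : nat) := HState { hval : 'I_h.+1 * 'I_h.+1; _ : @stateP h hval }.
HB.instance Definition _ h := [isSub for @hval h].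
HB.instance Definition _ h := [Equality of hstate h by <:].
HB.instance Definition _ h := [Choice of hstate h by <:].
HB.instance Definition _ h := [Countable of hstate h by <:].
HB.instance Definition _ h := [Finite of hstate h by <:].

Definition sa (h : nat) (s : hstate h) : nat := (val s).1.
Definition sb (h : nat) (s : hstate h) : nat := (val s).2.
Definition is_star (h : nat) (s : hstate h) : bool := sa s == 0%N.
Definition is_init (h : nat) (s : hstate h) : bool :=
  (sa s == h.-1) && (sb s == 1%N).

Definition Pent (R : realFieldType) (lamL gam : R) (h : nat) (s t : hstate h) : R :=
  let a := sa s in let b := sb s in let ta := sa t in let tb := sb t in
  if is_star s then 0 else
      ([&& (1 < a)%N, ta == a.-1 & tb == b.+1])%:R
        * (a%:R * lamL / (a%:R * lamL + gam))
    + ((a == 1%N) && is_star t)%:R * (lamL / (lamL + gam))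
    + ([&& (2 <= b)%N, ta == a & tb == b.-1])%:R
        * ((b.-1)%:R * gam / (b%:R * (a%:R * lamL + gam))).

Definition Phient (R : realFieldType) (lamG lamL gam : R) (h : nat) (s t : hstate h) : R :=
  let a := sa s in let b := sb s in let ta := sa t in let tb := sb t in
  if is_star s then (is_init t)%:R * (lamG / gam) else
      ([&& (1 < a)%N, ta == a.-1 & tb == b.+1])%:R
        * (a%:R * lamL / (b%:R * (a%:R * lamL + gam)))
    + ((a == 1%N) && is_star t)%:R * (lamL / (b%:R * (lamL + gam)))
    + (is_init t)%:R * (lamG / (b%:R * (a%:R * lamL + gam))).

Definition Pmx (R : realFieldType) (lamL gam : R) (h : nat) : 'M[R]_#|{: hstate h}| :=
  \matrix_(i, j) Pent lamL gam (enum_val i) (enum_val j).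

Definition Phimx (R : realFieldType) (lamG lamL gam : R) (h : nat) : 'M[R]_#|{: hstate h}| :=
  \matrix_(i, j) Phient lamG lamL gam (enum_val i) (enum_val j).

Definition Mmx (R : realFieldType) (lamG lamL gam : R) (h : nat) : 'M[R]_#|{: hstate h}| :=
  invmx (1%:M - Pmx lamL gam h) *m Phimx lamG lamL gam h.

Definition y0 (R : realFieldType) (h : nat) : 'rV[R]_#|{: hstate h}| :=
  \row_j (is_init (enum_val j))%:R.

Definition ygen (R : realFieldType) (lamG lamL gam : R) (h n : nat) : 'rV[R]_#|{: hstate h}| :=
  iter n (fun v => v *m Mmx lamG lamL gam h) (y0 R h).

Definition yent (R : realFieldType) (lamG lamL gam : R) (h n : nat) (s : hstate h) : R :=
  ygen lamG lamL gam h n 0 (enum_rank s).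

(* The household epidemic is the continuous-time Markov chain with state
   (a, c) where a = number of susceptibles and c j = number of currently
   infectious individuals of (household) generation j.  From state (a,c),
   each generation-j infective recovers at rate gam (c j -> c j - 1) and
   generation-j infectives infect at total rate lamL * a * c j
   (a -> a - 1, c (j+1) -> c (j+1) + 1).  Means of counts only depend on the
   embedded jump chain; hh_mean fuel a c i is the expected number of future
   infections in generation i starting from (a,c) (fuel bounds the number of
   jumps; 2a + sum c decreases by one at each jump). *)
Definition upd (c : nat -> nat) (j v : nat) : nat -> nat :=
  fun k => if k == j then v else c k.

Fixpoint hh_mean (R : realFieldType) (lamL gam : R) (h fuel a : nat) (c : nat -> nat)
    (i : nat) : R :=
  match fuel with
  | 0%N => 0
  | fuel'.+1 =>
    let b := (\sum_(j < h) c j)%N in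
    if b == 0%N then 0 else
    let tot := b%:R * (a%:R * lamL + gam) in
    \sum_(j < h)
      ( (c j)%:R * gam / tot * hh_mean lamL gam h fuel' a (upd c j (c j).-1) i
      + (c j)%:R * (a%:R * lamL) / tot *
          ((i == j.+1)%:R
           + hh_mean lamL gam h fuel' a.-1 (upd c j.+1 (c j.+1).+1) i))
  end.

Definition mu (R : realFieldType) (lamL gam : R) (h i : nat) : R :=
  (i == 0%N)%:R
  + hh_mean lamL gam h (2 * h) h.-1 (fun k => (k == 0%N : nat)) i.

(* xhist n = [:: x_n; x_{n-1}; ...; x_0], each x_m as a function i |-> x_{m,i}
   (zero for i >= h). *)
Definition x_init (R : realFieldType) (i : nat) : R := (i == 0%N)%:R.

Definition x_step (R : realFieldType) (lamG lamL gam : R) (h : nat)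
    (hist : seq (nat -> R)) : nat -> R :=
  fun i =>
    if (h <= i)%N then 0 else
    if i == 0%N then lamG / gam * \sum_(k < h) (head (fun _ => 0) hist) k
    else mu lamL gam h i * (nth (fun _ => 0) hist i.-1) 0%N.

Fixpoint xhist (R : realFieldType) (lamG lamL gam : R) (h n : nat) : seq (nat -> R) :=
  match n with
  | 0%N => [:: @x_init R]
  | n'.+1 => let hs := xhist lamG lamL gam h n' in x_step lamG lamL gam h hs :: hs
  end.

Definition xgen (R : realFieldType) (lamG lamL gam : R) (h n i : nat) : R :=
  head (fun _ => 0) (xhist lamG lamL gam h n) i.

(* Main.v *)
Require Import Defs.
From mathcomp Require Import all_boot all_order all_algebra.
From mathcomp Require Import zify ring lra.
Import Order.TTheory GRing.Theory Num.Theory.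
Local Open Scope ring_scope.
Set Implicit Arguments. Unset Strict Implicit. Unset Printing Implicit Defensive.

Section S.
Variables (R : realFieldType) (h : nat).

Lemma hs_sum (F : hstate h -> R) :
  \sum_(i < #|{: hstate h}|) F (enum_val i) = \sum_t F t.
Proof.
rewrite (reindex (@enum_rank _)) /=; last first.
  by apply: onW_bij; exact: enum_rank_bij.
by apply: eq_bigr => t _; rewrite enum_rankK.
Qed.

Lemma hstate_props (s : hstate h) :
  [/\ (sa s <= h)%N, (sb s <= h)%N &
   ((0 < sa s)%N && (0 < sb s)%N && (sa s + sb s <= h)%N) || ((sa s == 0%N) && (sb s == 1%N))].
Proof.
case: s => [[x y] P] /=; rewrite /sa /sb /=.
move: P; rewrite /stateP /= => P.
split; [by rewrite -ltnS | by rewrite -ltnS |].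
by case/orP: P => [/and3P[-> -> ->]|->] //; rewrite orbT.
Qed.

Lemma is_starE (t : hstate h) : is_star t = (sa t == 0%N) && (sb t == 1%N).
Proof.
rewrite /is_star; case: (hstate_props t) => _ _.
by case: eqP => //= ->; rewrite ltnn.
Qed.

Lemma nonstar (s : hstate h) : ~~ is_star s ->
  [/\ (0 < sa s)%N, (0 < sb s)%N & (sa s + sb s <= h)%N].
Proof.
rewrite is_starE; case: (hstate_props s) => _ _.
case/orP=> [/andP[/andP[-> ->] ->]|->] //.
Qed.

Definition validxy (x y : nat) := [&& (0 < x)%N, (0 < y)%N & (x + y <= h)%N] || ((x == 0%N) && (y == 1%N)).

Lemma sum_pt (x y : nat) (g : nat -> nat -> R) : (0 < h)%N -> validxy x y ->
  \sum_(t : hstate h) ((sa t == x) && (sb t == y))%:R * g (sa t) (sb t) = g x y.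
Proof.
move=> h0 V.
have [hx hy] : (x < h.+1)%N /\ (y < h.+1)%N.
  by move: V; rewrite /validxy => /orP [/and3P[? ? ?] | /andP[/eqP ? /eqP ?]]; lia.
have P : @stateP h (Ordinal hx, Ordinal hy) by [].
pose t0 := HState P.
rewrite (bigD1 t0) //= big1 ?addr0.
  by rewrite /sa /sb /= !eqxx mul1r.
move=> t /negbTE nt.
suff -> : (sa t == x) && (sb t == y) = false by rewrite mul0r.
apply/negbTE/negP => /andP[/eqP ex /eqP ey].
move: nt; suff -> : t = t0 by rewrite eqxx.
apply: val_inj => /=; case: t ex ey => [[u v] Q] /=; rewrite /sa /sb /= => ex ey.
by congr pair; apply: val_inj.
Qed.

Lemma sum_ptB (B : bool) (x y : nat) (g : nat -> nat -> R) : (0 < h)%N -> (B -> validxy x y) ->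
  \sum_(t : hstate h) (B && ((sa t == x) && (sb t == y)))%:R * g (sa t) (sb t) = B%:R * g x y.
Proof.
move=> h0; case: B => V; first by rewrite -(sum_pt _ h0 (V isT)) mul1r.
by rewrite big1 ?mul0r // => t _; rewrite mul0r.
Qed.

End S.

Section DS.
Variables (R : realFieldType) (lamL gam : R).

Fixpoint Drow (Dp Dm : nat -> R) (a b : nat) : R :=
  match b with
  | 0%N => 0
  | b'.+1 => b'%:R * gam / (b'.+1%:R * (a%:R * lamL + gam)) * Drow Dp Dm a b'
           + a%:R * lamL / (a%:R * lamL + gam) * Dp b'.+2
           + a%:R * lamL / (b'.+1%:R * (a%:R * lamL + gam)) * Dm b'.+2
  end.
Fixpoint Dcol (Dm : nat -> nat -> R) (a : nat) : nat -> R :=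
  match a with 0%N => fun _ => 0 | a'.+1 => Drow (Dcol Dm a') (Dm a') a'.+1 end.
Fixpoint D (e : nat) : nat -> nat -> R :=
  match e with 0%N => fun _ _ => 1 | e'.+1 => Dcol (D e') end.

Lemma D0 a b : D 0 a b = 1. Proof. by []. Qed.
Lemma De0 e b : D e.+1 0 b = 0. Proof. by []. Qed.
Lemma D0b e b : D e 0 b = (e == 0%N)%:R. Proof. by case: e. Qed.

Lemma Drec e a b : (0 < b)%N -> D e.+1 a b =
  (b.-1)%:R * gam / (b%:R * (a%:R * lamL + gam)) * D e.+1 a b.-1
  + a%:R * lamL / (a%:R * lamL + gam) * D e.+1 a.-1 b.+1
  + a%:R * lamL / (b%:R * (a%:R * lamL + gam)) * D e a.-1 b.+1.
Proof.
case: a => [|a].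
  by move=> _ /=; ring.
by case: b.
Qed.

Lemma Dzero e a b : (a < e)%N -> D e a b = 0.
Proof.
elim: e a b => [|e IHe] a b //.
elim: a b => [|a IHa] b H; first by [].
have Ha : (a < e)%N by lia.
elim: b => [|b IHb] //.
rewrite [LHS]/= -/(Dcol (D e) a.+1 b) -/(Dcol (D e) a) -/(D e.+1 a) -/(D e.+1 a.+1).
by rewrite IHb IHa ?IHe //; [ring | lia].
Qed.

End DS.

Section HH.
Variables (R : realFieldType) (lamL gam : R) (h : nat).

Definition bsum (c : nat -> nat) := (\sum_(j < h) c j)%N.

Lemma c_le_bsum (c : nat -> nat) (k : 'I_h) : (c k <= bsum c)%N.
Proof. by rewrite /bsum (bigD1 k) //= leq_addr. Qed.

Lemma sum_upd (c : nat -> nat) (j v : nat) (F : nat -> R) : (j < h)%N ->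
  \sum_(k < h) (upd c j v k)%:R * F k = \sum_(k < h) (c k)%:R * F k + (v%:R - (c j)%:R) * F j.
Proof.
move=> hj.
rewrite (bigD1 (Ordinal hj)) //= [X in _ = X + _](bigD1 (Ordinal hj)) //=.
rewrite /upd eqxx.
rewrite (eq_bigr (fun k : 'I_h => (c k)%:R * F k)); last first.
  move=> k nk; rewrite ifN //; apply: contra nk => /eqP e; apply/eqP; exact: val_inj.
ring.
Qed.

Lemma bsum_upd (c : nat -> nat) (j v : nat) : (j < h)%N -> (bsum (upd c j v) + c j = bsum c + v)%N.
Proof.
move=> hj; rewrite /bsum (bigD1 (Ordinal hj)) //= [X in _ = (X + _)%N](bigD1 (Ordinal hj)) //=.
rewrite /upd eqxx.
rewrite (eq_bigr (fun k : 'I_h => c k)); last first.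
  move=> k nk; rewrite ifN //; apply: contra nk => /eqP e; apply/eqP; exact: val_inj.
lia.
Qed.

End HH.

Section HH2.
Variables (R : realFieldType) (lamL gam : R) (h : nat).
Hypotheses (lamL0 : 0 < lamL) (gam0 : 0 < gam).

Lemma hh_D fuel a c i : (forall k, (0 < c k)%N -> (a + k < h)%N) ->
  (2 * a + bsum h c <= fuel)%N ->
  hh_mean lamL gam h fuel a c i =
  \sum_(k < h) (c k)%:R * ((k < i)%N%:R * D lamL gam (i - k) a (bsum h c)).
Proof.
elim: fuel a c => [|f IH] a c Hinv Hf.
  transitivity (0:R); first by [].
  symmetry; apply: big1 => k _.
  have H1 := c_le_bsum c k.
  have -> : c k = 0%N by lia.
  by rewrite mul0r.
rewrite [LHS]/= -/(bsum h c).
case: (bsum h c =P 0%N) => [b0|bn0].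
  symmetry; apply: big1 => k _.
  have H1 := c_le_bsum c k.
  have -> : c k = 0%N by lia.
  by rewrite mul0r.
have [b' Eb] : exists b', bsum h c = b'.+1 by exists (bsum h c).-1; lia.
rewrite Eb.
set tot := (b'.+1%:R * (a%:R * lamL + gam)).
set S1 := \sum_(k < h) (c k)%:R * ((k < i)%N%:R * D lamL gam (i - k) a b').
set S2 := \sum_(k < h) (c k)%:R * ((k < i)%N%:R * D lamL gam (i - k) a.-1 b'.+2).
set T := \sum_(k < h) (c k)%:R * ((k < i)%N%:R * D lamL gam (i - k.+1) a.-1 b'.+2).
rewrite (eq_bigr (fun j : 'I_h => gam / tot * ((c j)%:R * S1)
   + (- (gam / tot)) * ((c j)%:R * ((j < i)%N%:R * D lamL gam (i - j) a b'))
   + a%:R * lamL / tot * ((c j)%:R * S2)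
   + a%:R * lamL / tot * ((c j)%:R * ((i == j.+1)%:R + (j.+1 < i)%N%:R * D lamL gam (i - j.+1) a.-1 b'.+2)))); last first.
  move=> j _.
  case: (posnP (c j)) => [cj0|cjp].
    by rewrite cj0; ring.
  have hb1 : bsum h (upd c j (c j).-1) = b'.
    by have := @bsum_upd h c j (c j).-1 (ltn_ord j); lia.
  rewrite (IH a); first last.
  - by rewrite hb1; lia.
  - move=> k; rewrite /upd; case: eqP => [->|_]; last exact: Hinv.
    by move=> _; apply: Hinv; lia.
  rewrite hb1 (@sum_upd _ _ _ _ _ (fun k => (k < i)%N%:R * D lamL gam (i - k) a b')) ?ltn_ord // -/S1.
  have e1 : ((c j).-1%:R : R) = (c j)%:R - 1.
    by rewrite -[in RHS](prednK cjp) mulrSr addrK.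
  rewrite e1.
  case: (posnP a) => [a0|ap].
    by rewrite a0; ring.
  have hj1 : (j.+1 < h)%N by have := Hinv j cjp; lia.
  have hb2 : bsum h (upd c j.+1 (c j.+1).+1) = b'.+2.
    by have := @bsum_upd h c j.+1 (c j.+1).+1 hj1; lia.
  rewrite (IH a.-1); first last.
  - by rewrite hb2; lia.
  - move=> k; rewrite /upd; case: eqP => [->|_] H.
      by have := Hinv j cjp; lia.
    by have := Hinv k H; lia.
  rewrite hb2 (@sum_upd _ _ _ _ _ (fun k => (k < i)%N%:R * D lamL gam (i - k) a.-1 b'.+2)) // -/S2 mulrSr.
  ring.
rewrite !big_split /= -!mulr_sumr.
rewrite -!mulr_suml -natr_sum -/(bsum h c) Eb -/S1 -/S2.
have ET : \sum_(j < h) (c j)%:R * ((i == j.+1)%:R + (j.+1 < i)%N%:R * D lamL gam (i - j.+1) a.-1 b'.+2) = T.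
  apply: eq_bigr => j _; congr (_ * _).
  case H: (i <= j)%N.
    have -> : (i == j.+1) = false by lia.
    have -> : (j < i)%N = false by lia.
    have -> : (j.+1 < i)%N = false by lia.
    by rewrite add0r !mul0r.
  case H2: (j.+1 < i)%N.
    have -> : (j < i)%N = true by lia.
    have -> : (i == j.+1) = false by lia.
    by rewrite add0r.
  have -> : (i == j.+1) = true by lia.
  have -> : (j < i)%N = true by lia.
  have -> : (i - j.+1 = 0)%N by lia.
  by rewrite mul0r addr0 mul1r.
rewrite ET.
rewrite (eq_bigr (fun k : 'I_h => (b'%:R * gam / tot) * ((c k)%:R * ((k < i)%N%:R * D lamL gam (i - k) a b'))
   + (a%:R * lamL / (a%:R * lamL + gam)) * ((c k)%:R * ((k < i)%N%:R * D lamL gam (i - k) a.-1 b'.+2))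
   + (a%:R * lamL / tot) * ((c k)%:R * ((k < i)%N%:R * D lamL gam (i - k.+1) a.-1 b'.+2)))); last first.
  move=> k _; case: (ltnP k i) => H.
    have E : (i - k = (i - k.+1).+1)%N by lia.
    by rewrite E Drec // succnK /tot !mul1r; ring.
  by rewrite (_ : (false%:R : R) = 0) // !mul0r !mulr0 !addr0.
rewrite !big_split /= -!mulr_sumr -/S1 -/S2 -/T.
have A0 : a%:R * lamL + gam != 0.
  apply: lt0r_neq0; apply: ltr_wpDl => //.
  by apply: mulr_ge0 => //; exact: ltW.
rewrite /tot; field.
by rewrite A0 /= addrC -mulrSr pnatr_eq0.
Qed.
End HH2.

Section MU.
Variables (R : realFieldType) (lamL gam : R) (h : nat).
Hypotheses (lamL0 : 0 < lamL) (gam0 : 0 < gam).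

Lemma mu_D i : (0 < h)%N -> (0 < i)%N -> mu lamL gam h i = D lamL gam i h.-1 1.
Proof.
move=> h0 i0.
have hb : bsum h (fun k => (k == 0%N : nat)) = 1%N.
  rewrite /bsum (bigD1 (Ordinal h0)) //= big1 // => k nk.
  suff : (k != 0%N :> nat) by case: (nat_of_ord k).
  apply: contra nk => /eqP e; apply/eqP; exact: val_inj.
rewrite /mu hh_D //; first last.
- rewrite hb; lia.
- by move=> k; case: (k =P 0%N) => [->|] //=; lia.
rewrite hb (bigD1 (Ordinal h0)) //= big1 ?addr0.
  by rewrite i0 subn0 !mul1r (_ : (i == 0%N) = false) ?add0r //; lia.
move=> k nk.
suff -> : (k == 0%N :> nat) = false by rewrite mul0r.
apply/negbTE; apply: contra nk => /eqP e; apply/eqP; exact: val_inj.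
Qed.
End MU.

Lemma natr_false (R : pzSemiRingType) : (false%:R : R) = 0. Proof. by []. Qed.
Lemma natr_true (R : pzSemiRingType) : (true%:R : R) = 1. Proof. by []. Qed.

Section MX.
Variables (R : realFieldType) (h : nat) (lamG lamL gam : R).
Hypotheses (h2 : (2 <= h)%N) (lamG0 : 0 < lamG) (lamL0 : 0 < lamL) (gam0 : 0 < gam).

Local Notation N := #|{: hstate h}|.

Definition key (s : hstate h) := (2 * sa s + sb s)%N.

Lemma Pent_key s t : (key s <= key t)%N -> Pent lamL gam s t = 0.
Proof.
rewrite /Pent /key /=; case: ifP => // ns H.
have [a0 b0 ab] := nonstar (negbT ns).
have c1 : [&& (1 < sa s)%N, sa t == (sa s).-1 & sb t == (sb s).+1] = false.
  by apply/negbTE/and3P => -[? /eqP ? /eqP ?]; lia.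
have c2 : (sa s == 1%N) && is_star t = false.
  by rewrite is_starE; apply/negbTE/and3P => -[/eqP ? /eqP ? /eqP ?]; lia.
have c3 : [&& (2 <= sb s)%N, sa t == sa s & sb t == (sb s).-1] = false.
  by apply/negbTE/and3P => -[? /eqP ? /eqP ?]; lia.
by rewrite c1 c2 c3 !natr_false !mul0r !addr0.
Qed.


Definition Ppow k : 'M[R]_N := iter k (mulmx (Pmx lamL gam h)) 1%:M.

Lemma Ppow_entry k s t : (key s < key t + k)%N -> Ppow k (enum_rank s) (enum_rank t) = 0.
Proof.
elim: k s t => [|k IH] s t H.
  rewrite /= mxE; case: eqP => [/enum_rank_inj E|_] //.
  by subst t; rewrite addn0 ltnn in H.
rewrite /= mxE.
rewrite (eq_bigr (fun j : 'I_N => Pent lamL gam s (enum_val j) * Ppow k (enum_rank (enum_val j)) (enum_rank t))); last first.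
  by move=> j _; rewrite mxE enum_rankK enum_valK.
rewrite (hs_sum (fun u : hstate h => Pent lamL gam s u * Ppow k (enum_rank u) (enum_rank t))).
apply: big1 => u _.
case: (leqP (key s) (key u)) => Hu; first by rewrite Pent_key // mul0r.
by rewrite IH ?mulr0 //; lia.
Qed.

Lemma Ppow_big : Ppow (3 * h).+1 = 0.
Proof.
apply/matrixP => i j; rewrite -(enum_valK i) -(enum_valK j) Ppow_entry ?mxE //.
move: (enum_val i) (enum_val j) => s t.
have [? ? _] := hstate_props s.
have [? ? _] := hstate_props t.
rewrite /key; lia.
Qed.

Lemma tele K : (1%:M - Pmx lamL gam h) *m (\sum_(k < K) Ppow k) = 1%:M - Ppow K.
Proof.
elim: K => [|K IH]; first by rewrite big_ord0 mulmx0 subrr.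
rewrite big_ord_recr /= mulmxDr IH mulmxBl mul1mx.
by rewrite addrA subrK.
Qed.

Lemma unitP : (1%:M - Pmx lamL gam h) \in unitmx.
Proof.
have E := tele (3 * h).+1.
rewrite Ppow_big subr0 in E.
by case: (mulmx1_unit E).
Qed.


Lemma mx_addE m n (A B : 'M[R]_(m, n)) i j : (A + B) i j = A i j + B i j.
Proof. by rewrite mxE. Qed.
Lemma mx_oppE m n (A : 'M[R]_(m, n)) i j : (- A) i j = - A i j.
Proof. by rewrite mxE. Qed.

Definition colv (g : nat -> nat -> R) : 'cV[R]_N :=
  \col_i g (sa (enum_val i)) (sb (enum_val i)).

Lemma colvE g s : colv g (enum_rank s) 0 = g (sa s) (sb s).
Proof. by rewrite mxE enum_rankK. Qed.

Lemma mulPE s g : (Pmx lamL gam h *m colv g) (enum_rank s) 0 =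
  \sum_(t : hstate h) Pent lamL gam s t * g (sa t) (sb t).
Proof.
rewrite mxE (eq_bigr (fun j : 'I_N => Pent lamL gam s (enum_val j) * g (sa (enum_val j)) (sb (enum_val j)))).
  exact: (hs_sum (fun t : hstate h => Pent lamL gam s t * g (sa t) (sb t))).
by move=> j _; rewrite !mxE enum_rankK.
Qed.

Lemma mulPhiE s g : (Phimx lamG lamL gam h *m colv g) (enum_rank s) 0 =
  \sum_(t : hstate h) Phient lamG lamL gam s t * g (sa t) (sb t).
Proof.
rewrite mxE (eq_bigr (fun j : 'I_N => Phient lamG lamL gam s (enum_val j) * g (sa (enum_val j)) (sb (enum_val j)))).
  exact: (hs_sum (fun t : hstate h => Phient lamG lamL gam s t * g (sa t) (sb t))).
by move=> j _; rewrite !mxE enum_rankK.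
Qed.

Lemma h0 : (0 < h)%N. Proof. lia. Qed.

Definition RowP (g : nat -> nat -> R) (a b : nat) : R :=
  (1 < a)%N%:R * (a%:R * lamL / (a%:R * lamL + gam)) * g a.-1 b.+1
  + (a == 1%N)%:R * (lamL / (lamL + gam)) * g 0%N 1%N
  + (2 <= b)%N%:R * ((b.-1)%:R * gam / (b%:R * (a%:R * lamL + gam))) * g a b.-1.

Definition RowPhi (g : nat -> nat -> R) (a b : nat) : R :=
  (1 < a)%N%:R * (a%:R * lamL / (b%:R * (a%:R * lamL + gam))) * g a.-1 b.+1
  + (a == 1%N)%:R * (lamL / (b%:R * (lamL + gam))) * g 0%N 1%N
  + lamG / (b%:R * (a%:R * lamL + gam)) * g h.-1 1%N.

Lemma sumP_ns s g : ~~ is_star s ->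
  \sum_(t : hstate h) Pent lamL gam s t * g (sa t) (sb t) = RowP g (sa s) (sb s).
Proof.
move=> ns; have [a0 b0 ab] := nonstar ns.
rewrite /Pent (negbTE ns) /=.
rewrite (eq_bigr (fun t : hstate h =>
    (sa s)%:R * lamL / ((sa s)%:R * lamL + gam) *
      ([&& (1 < sa s)%N, sa t == (sa s).-1 & sb t == (sb s).+1]%:R * g (sa t) (sb t))
  + lamL / (lamL + gam) *
      (((sa s == 1%N) && ((sa t == 0%N) && (sb t == 1%N)))%:R * g (sa t) (sb t))
  + (sb s).-1%:R * gam / ((sb s)%:R * ((sa s)%:R * lamL + gam)) *
      ([&& (2 <= sb s)%N, sa t == sa s & sb t == (sb s).-1]%:R * g (sa t) (sb t)))); last first.
  by move=> t _; rewrite is_starE; ring.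
rewrite !big_split /= -!mulr_sumr.
rewrite (sum_ptB g h0); last first.
  by move=> ?; rewrite /validxy; apply/orP; left; apply/and3P; split; lia.
rewrite (sum_ptB g h0); last by move=> _; rewrite /validxy eqxx orbT.
rewrite (sum_ptB g h0); last first.
  by move=> ?; rewrite /validxy; apply/orP; left; apply/and3P; split; lia.
rewrite /RowP; ring.
Qed.

Lemma sumPhi_ns s g : ~~ is_star s ->
  \sum_(t : hstate h) Phient lamG lamL gam s t * g (sa t) (sb t) = RowPhi g (sa s) (sb s).
Proof.
move=> ns; have [a0 b0 ab] := nonstar ns.
rewrite /Phient (negbTE ns) /=.
rewrite (eq_bigr (fun t : hstate h =>
    (sa s)%:R * lamL / ((sb s)%:R * ((sa s)%:R * lamL + gam)) *
      ([&& (1 < sa s)%N, sa t == (sa s).-1 & sb t == (sb s).+1]%:R * g (sa t) (sb t))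
  + lamL / ((sb s)%:R * (lamL + gam)) *
      (((sa s == 1%N) && ((sa t == 0%N) && (sb t == 1%N)))%:R * g (sa t) (sb t))
  + lamG / ((sb s)%:R * ((sa s)%:R * lamL + gam)) *
      (((sa t == h.-1) && (sb t == 1%N))%:R * g (sa t) (sb t)))); last first.
  by move=> t _; rewrite is_starE /is_init; ring.
rewrite !big_split /= -!mulr_sumr.
rewrite (sum_ptB g h0); last first.
  by move=> ?; rewrite /validxy; apply/orP; left; apply/and3P; split; lia.
rewrite (sum_ptB g h0); last by move=> _; rewrite /validxy eqxx orbT.
rewrite (sum_pt g h0); last first.
  by rewrite /validxy; apply/orP; left; apply/and3P; split; lia.
rewrite /RowPhi; ring.
Qed.

Lemma sumP_star s g : is_star s ->
  \sum_(t : hstate h) Pent lamL gam s t * g (sa t) (sb t) = 0.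
Proof. by move=> st; rewrite /Pent st /=; apply: big1 => t _; rewrite mul0r. Qed.

Lemma sumPhi_star s g : is_star s ->
  \sum_(t : hstate h) Phient lamG lamL gam s t * g (sa t) (sb t) = lamG / gam * g h.-1 1%N.
Proof.
move=> st; rewrite /Phient st /=.
rewrite (eq_bigr (fun t : hstate h => lamG / gam *
      (((sa t == h.-1) && (sb t == 1%N))%:R * g (sa t) (sb t)))); last first.
  by move=> t _; rewrite /is_init; ring.
rewrite -mulr_sumr (sum_pt g h0) //.
by rewrite /validxy; apply/orP; left; apply/and3P; split; lia.
Qed.

Lemma M_col g1 g2 :
  g1 0%N 1%N = lamG / gam * g2 h.-1 1%N ->
  (forall a b, (0 < a)%N -> (0 < b)%N -> (a + b <= h)%N ->
     g1 a b - RowP g1 a b = RowPhi g2 a b) ->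
  Mmx lamG lamL gam h *m colv g2 = colv g1.
Proof.
move=> Hs Hn.
have E : (1%:M - Pmx lamL gam h) *m colv g1 = Phimx lamG lamL gam h *m colv g2.
  apply/matrixP => i j; rewrite (ord1 j) -(enum_valK i).
  move: (enum_val i) => s.
  rewrite mulmxBl mul1mx mx_addE mx_oppE colvE mulPE mulPhiE.
  case ns: (is_star s).
    rewrite sumP_star // sumPhi_star // subr0.
    by move: ns; rewrite is_starE => /andP[/eqP -> /eqP ->].
  have [a0 b0 ab] := nonstar (negbT ns).
  by rewrite sumP_ns ?ns // sumPhi_ns ?ns //; apply: Hn.
by rewrite /Mmx -mulmxA -E mulKmx //; exact: unitP.
Qed.

End MX.

Arguments D : simpl never.

Section FIN.
Variables (R : realFieldType) (h : nat) (lamG lamL gam : R).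
Hypotheses (h2 : (2 <= h)%N) (lamG0 : 0 < lamG) (lamL0 : 0 < lamL) (gam0 : 0 < gam).

Local Notation N := #|{: hstate h}|.
Definition muD d := D lamL gam d h.-1 1%N.

Lemma pos1 : lamL + gam != 0.
Proof. apply: lt0r_neq0; exact: addr_gt0. Qed.
Lemma pos2 a : a%:R * lamL + gam != 0.
Proof. apply: lt0r_neq0; apply: ltr_wpDl => //; apply: mulr_ge0 => //; exact: ltW. Qed.
Lemma pos3 : gam != 0. Proof. exact: lt0r_neq0. Qed.
Lemma posA (x : R) : 0 <= x -> x * lamL + gam != 0.
Proof. move=> x0; apply: lt0r_neq0; apply: ltr_wpDl => //; apply: mulr_ge0 => //; exact: ltW. Qed.
Lemma posB (x : R) : 0 <= x -> 2 + x != 0.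
Proof. by move=> x0; apply: lt0r_neq0; apply: ltr_wpDr. Qed.
Lemma pos4 b : (0 < b)%N -> (b%:R : R) != 0.
Proof. by rewrite pnatr_eq0 -lt0n. Qed.

Lemma MD d : Mmx lamG lamL gam h *m colv h (D lamL gam d) =
  colv h (fun a b => D lamL gam d.+1 a b + lamG / gam * muD d).
Proof.
apply: M_col => //.
  by rewrite De0 add0r.
move=> a b a0 b0 ab.
have P1 := pos1; have P2 := pos2 a; have P3 := pos3; have P4 := pos4 b0.
rewrite /RowP /RowPhi Drec //.
case: a a0 ab P2 => // -[|a] _ ab P2; case: b b0 ab P4 => // -[|b] _ ab P4.
all: rewrite /= ?De0 ?D0b.
all: rewrite /muD; field.
all: by rewrite ?pos1 ?pos3 ?posA ?posB // ?addr_ge0 ?ler0n.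
Qed.


Lemma hpos : (0 < h)%N. Proof. lia. Qed.

Definition Einit (a b : nat) : R := ((a == h.-1) && (b == 1%N))%:R.

Lemma ME : Mmx lamG lamL gam h *m colv h Einit = colv h (fun _ _ => lamG / gam).
Proof.
apply: M_col => //.
  by rewrite /Einit !eqxx mulr1.
move=> a b a0 b0 ab.
have P1 := pos1; have P2 := pos2 a; have P3 := pos3; have P4 := pos4 b0.
rewrite /RowP /RowPhi /Einit.
have -> : (b.+1 == 1%N) = false by lia.
have -> : (0%N == h.-1) = false by lia.
rewrite !eqxx !andbF /= !natr_false.
case: a a0 ab P2 => // -[|a] _ ab P2; case: b b0 ab P4 => // -[|b] _ ab P4.
all: rewrite /=; field.
all: by rewrite ?pos1 ?pos3 ?posA ?posB // ?addr_ge0 ?ler0n.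
Qed.

Lemma rowcolE (v : 'rV[R]_N) g :
  (v *m colv h g) 0 0 = \sum_(t : hstate h) v 0 (enum_rank t) * g (sa t) (sb t).
Proof.
rewrite mxE (eq_bigr (fun j : 'I_N => v 0 (enum_rank (enum_val j)) * g (sa (enum_val j)) (sb (enum_val j)))).
  exact: (hs_sum (fun t : hstate h => v 0 (enum_rank t) * g (sa t) (sb t))).
by move=> j _; rewrite !mxE enum_valK.
Qed.

Definition Y n d := (ygen lamG lamL gam h n *m colv h (D lamL gam d)) 0 0.

Lemma Y_S n d : Y n.+1 d = Y n d.+1 + lamG / gam * muD d * Y n 0.
Proof.
rewrite /Y /= -mulmxA MD.
have -> : colv h (fun a b => D lamL gam d.+1 a b + lamG / gam * muD d) =
   colv h (D lamL gam d.+1) + (lamG / gam * muD d) *: colv h (D lamL gam 0).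
  by apply/matrixP => i j; rewrite !mxE D0 mulr1.
rewrite mulmxDr -scalemxAr mx_addE.
by rewrite [X in _ + X]mxE.
Qed.

Lemma Y_0 d : Y 0 d = muD d.
Proof.
rewrite /Y /= rowcolE.
rewrite (eq_bigr (fun t : hstate h => ((sa t == h.-1) && (sb t == 1%N))%:R * D lamL gam d (sa t) (sb t))).
  rewrite (sum_pt _ hpos) //.
  by rewrite /validxy; apply/orP; left; apply/and3P; split; lia.
by move=> t _; rewrite /y0 mxE enum_rankK.
Qed.

Lemma Y_sum n : \sum_(s : hstate h) yent lamG lamL gam n s = Y n 0.
Proof.
rewrite /Y rowcolE; apply: eq_bigr => t _; by rewrite D0 mulr1.
Qed.

Lemma init_uniq (s t : hstate h) : is_init s -> is_init t -> t = s.
Proof.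
case: s => [[x y] P]; case: t => [[u v] Q]; rewrite /is_init /sa /sb /=.
move=> /andP[/eqP e1 /eqP e2] /andP[/eqP e3 /eqP e4].
apply: val_inj => /=; congr pair; apply: val_inj => /=; lia.
Qed.

Lemma yinit_S n (s : hstate h) : is_init s -> yent lamG lamL gam n.+1 s = lamG / gam * Y n 0.
Proof.
move=> si.
have -> : yent lamG lamL gam n.+1 s = (ygen lamG lamL gam h n.+1 *m colv h Einit) 0 0.
  rewrite rowcolE (bigD1 s) //= big1 ?addr0.
    by move: si; rewrite /Einit /is_init => ->; rewrite mulr1.
  move=> t ts; rewrite /Einit.
  case ti: ((sa t == h.-1) && (sb t == 1%N)); last by rewrite mulr0.
  by move: ts; rewrite (init_uniq si ti) eqxx.
rewrite /= -mulmxA ME rowcolE /Y rowcolE mulr_sumr.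
by apply: eq_bigr => t _; rewrite D0 mulr1 mulrC.
Qed.

Lemma yinit_0 (s : hstate h) : is_init s -> yent lamG lamL gam 0 s = 1.
Proof. by move=> si; rewrite /yent /= /y0 mxE enum_rankK si. Qed.

End FIN.


Section XS.
Variables (R : realFieldType) (h : nat) (lamG lamL gam : R).
Hypotheses (h2 : (2 <= h)%N) (lamG0 : 0 < lamG) (lamL0 : 0 < lamL) (gam0 : 0 < gam).

Lemma xhist_nth n m : nth (fun _ => 0) (xhist lamG lamL gam h n) m =
  if (m <= n)%N then head (fun _ => 0) (xhist lamG lamL gam h (n - m)) else (fun _ => 0).
Proof.
elim: n m => [|n IH] m.
  by case: m => [|m]; [reflexivity | rewrite ltn0; case: m].
case: m => [|m] //=.
Qed.

Lemma xgen_00 : xgen lamG lamL gam h 0 0 = 1. Proof. by []. Qed.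

Lemma xgen_S0 n : xgen lamG lamL gam h n.+1 0 = lamG / gam * \sum_(k < h) xgen lamG lamL gam h n k.
Proof.
rewrite /xgen /= /x_step.
by have -> : (h <= 0)%N = false by lia.
Qed.

Lemma xgen_pos n i : (0 < i < h)%N ->
  xgen lamG lamL gam h n i = (i <= n)%N%:R * (mu lamL gam h i * xgen lamG lamL gam h (n - i) 0).
Proof.
move=> /andP[i0 ih].
case: n => [|n].
  rewrite /xgen /= /x_init.
  have -> : (i == 0%N) = false by lia.
  have -> : (i <= 0)%N = false by lia.
  by rewrite !mul0r.
rewrite /xgen /= /x_step.
have -> : (h <= i)%N = false by lia.
have -> : (i == 0%N) = false by lia.
rewrite xhist_nth.
case: (leqP i n.+1) => H.
  have -> : (i.-1 <= n)%N = true by lia.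
  have -> : (n - i.-1 = n.+1 - i)%N by lia.
  by rewrite mul1r.
have -> : (i.-1 <= n)%N = false by lia.
by rewrite mul0r mulr0.
Qed.

Lemma sum_ext (F : nat -> R) m k : (forall j, (m <= j)%N -> F j = 0) ->
  \sum_(j < m) F j = \sum_(j < m + k) F j.
Proof.
move=> H; elim: k => [|k IH]; first by rewrite addn0.
by rewrite addnS big_ord_recr /= -IH H ?addr0 // leq_addr.
Qed.

Lemma muD0 : muD h lamL gam 0 = 1. Proof. by []. Qed.
Lemma muD_big d : (h <= d)%N -> muD h lamL gam d = 0.
Proof. move=> H; apply: Dzero; lia. Qed.

Lemma Q0 n : \sum_(j < h) xgen lamG lamL gam h n j =
  \sum_(j < n.+1) xgen lamG lamL gam h (n - j) 0 * muD h lamL gam j.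
Proof.
pose H j := (j <= n)%N%:R * (xgen lamG lamL gam h (n - j) 0 * muD h lamL gam j).
transitivity (\sum_(j < h) H j).
  apply: eq_bigr => j _.
  case: (posnP j) => [->|jp].
    by rewrite /H muD0 subn0 !mulr1 mul1r.
  rewrite xgen_pos; last by rewrite jp ltn_ord.
  rewrite mu_D //; last lia.
  by rewrite /H /muD (mulrC (D _ _ _ _ _)).
rewrite (sum_ext n.+1 (F := H)); last first.
  by move=> j hj; rewrite /H muD_big // !mulr0.
transitivity (\sum_(j < n.+1) H j); last first.
  by apply: eq_bigr => j _; rewrite /H (_ : (j <= n)%N = true) ?mul1r //; have := ltn_ord j; lia.
rewrite [RHS](sum_ext h (F := H)) 1?[(n.+1 + h)%N]addnC //.
by move=> j hj; rewrite /H (_ : (j <= n)%N = false) ?mul0r //; lia.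
Qed.

Lemma Q1 n d : Y h lamG lamL gam n d =
  \sum_(j < n.+1) xgen lamG lamL gam h (n - j) 0 * muD h lamL gam (j + d).
Proof.
elim: n d => [|n IH] d.
  by rewrite Y_0 // big_ord1 subn0 xgen_00 mul1r add0n.
rewrite Y_S // !IH [RHS]big_ord_recl subn0 xgen_S0 Q0 add0n.
rewrite [X in _ = _ + X](eq_bigr (fun j : 'I_n.+1 => xgen lamG lamL gam h (n - j) 0 * muD h lamL gam (j + d.+1))); last first.
  by move=> j _; rewrite /bump /= subSS addSnnS.
have E0 : \sum_(j < n.+1) xgen lamG lamL gam h (n - j) 0 * muD h lamL gam (j + 0) =
  \sum_(j < n.+1) xgen lamG lamL gam h (n - j) 0 * muD h lamL gam j.
  by apply: eq_bigr => j _; rewrite addn0.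
rewrite E0.
ring.
Qed.

End XS.

Lemma Y0x (R : realFieldType) (h : nat) (lamG lamL gam : R) :
  (2 <= h)%N -> 0 < lamG -> 0 < lamL -> 0 < gam -> forall n,
  Y h lamG lamL gam n 0 = \sum_(j < h) xgen lamG lamL gam h n j.
Proof.
move=> h2 lG lL g n.
rewrite Q1 // Q0 //; apply: eq_bigr => j _; by rewrite addn0.
Qed.

Unset Implicit Arguments.

Theorem lemma3p1 (R : realFieldType) (h : nat) (lamG lamL gam : R) :
  (2 <= h)%N -> 0 < lamG -> 0 < lamL -> 0 < gam ->
  forall n : nat,
    (forall s : hstate h, is_init s ->
       yent lamG lamL gam n s = xgen lamG lamL gam h n 0)
    /\ \sum_(s : hstate h) yent lamG lamL gam n s
       = \sum_(j < h) xgen lamG lamL gam h n j.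
Proof.
move=> h2 lG lL g n; split.
  move=> s si; case: n => [|n].
    by rewrite yinit_0.
  by rewrite yinit_S // Y0x // xgen_S0.
by rewrite Y_sum Y0x.
Qed.
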